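(* $z_{\mathrm{LC}}=z_D$, where $$z_{\mathrm{LC}}:=\inf\Big\{c^Tx+\sum_{s\in S}p_s\theta_s:\ (x,\theta_s)\in P_s(\mathbb{R}^n\times\mathbb{R}_+)\ \text{for all } s\in S\Big\}$$ (the infimum being over $x\in\mathbb{R}^n$ and $(\theta_s)_{s\in S}\in\mathbb{R}^S$), and $$z_D:=\sup\Big\{z(\lambda):\ \lambda=(\lambda^s)_{s\in S}\in(\mathbb{R}^n)^S,\ \sum_{s\in S}p_s\lambda^s=0\Big\},\qquad z(\lambda):=\sum_{s\in S}p_s\min_{(x^s,y^s)\in K^s}\big\{c^Tx^s+(q^s)^Ty^s+(\lambda^s)^Tx^s\big\}.$$
   Context: Two-stage stochastic integer program with finite scenario set $S$ and probabilities $p_s>0$, $\sum_{s\in S}p_s=1$. Data: $c\in\mathbb{R}^n$, matrix $A$ and vector $b$, and for each $s\in S$ matrices $T^s,W^s$ and vectors $h^s,q^s$ (all data rational). $X=\{x\in\mathbb{R}^n: x_j\in\mathbb{Z},\ j\in J_X\}$ and $Y=\{y\in\mathbb{R}^{n_y}: y_j\in\mathbb{Z},\ j\in J_Y\}$ for given index sets $J_X,J_Y$. For each $s$, $K^s:=\{(x,y)\in X\times Y: Ax\ge b,\ T^sx+W^sy\ge h^s\}$, assumed nonempty and bounded. Define $\overline{Q}_s^*:\mathbb{R}^n\times\mathbb{R}_+\to\mathbb{R}$ by $\overline{Q}_s^*(\pi,\pi_0)=\min\{\pi^Tx+\pi_0(q^s)^Ty:(x,y)\in K^s\}$. For $\Pi\subseteq\mathbb{R}^n\times\mathbb{R}_+$,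 $P_s(\Pi):=\{(x,\theta_s)\in\mathbb{R}^n\times\mathbb{R}:\ \pi^Tx+\pi_0\theta_s\ge\overline{Q}_s^*(\pi,\pi_0)\text{ for all }(\pi,\pi_0)\in\Pi\}$. *)

(* Defs.v *)
From HB Require Import structures.
From mathcomp Require Import all_boot all_order all_algebra.
From mathcomp Require Import boolp classical_sets reals ereal.
Set Implicit Arguments. Unset Strict Implicit. Unset Printing Implicit Defensive.
Import Order.TTheory GRing.Theory Num.Theory.
Local Open Scope ring_scope.
Local Open Scope classical_set_scope.

Record tssip (S : finType) (n ny : nat) := TSSIP {
  vc : 'cV[rat]_n;
  m1 : nat;
  mA : 'M[rat]_(m1, n);
  vb : 'cV[rat]_m1;
  m2 : S -> nat;
  mT : forall s, 'M[rat]_(m2 s, n);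
  mW : forall s, 'M[rat]_(m2 s, ny);
  vh : forall s, 'cV[rat]_(m2 s);
  vq : S -> 'cV[rat]_ny;
  JX : {set 'I_n};
  JY : {set 'I_ny}
}.

Section Defs.
Variables (R : realType) (S : finType) (n ny : nat) (D : tssip S n ny).

Definition rl (a b : nat) (M : 'M[rat]_(a, b)) : 'M[R]_(a, b) := map_mx ratr M.

Definition dot (k : nat) (u v : 'cV[R]_k) : R := \sum_(i < k) u i 0 * v i 0.

Definition vle (k : nat) (u v : 'cV[R]_k) : Prop := forall i, u i 0 <= v i 0.

Definition inX (x : 'cV[R]_n) : Prop := forall j, j \in JX D -> x j 0 \is a Num.int.
Definition inY (y : 'cV[R]_ny) : Prop := forall j, j \in JY D -> y j 0 \is a Num.int.

Definition Kset (s : S) : set ('cV[R]_n * 'cV[R]_ny) :=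
  [set xy | inX xy.1 /\ inY xy.2 /\ vle (rl (vb D)) (rl (mA D) *m xy.1) /\
            vle (rl (vh D s)) (rl (mT D s) *m xy.1 + rl (mW D s) *m xy.2)].

Definition Kbounded (s : S) : Prop :=
  exists M : R, forall xy, Kset s xy ->
    (forall i, `|xy.1 i 0| <= M) /\ (forall j, `|xy.2 j 0| <= M).

(* \overline{Q}_s^*(pi, pi0) = min over K^s (written as an infimum) *)
Definition Qbar (s : S) (pi : 'cV[R]_n) (pi0 : R) : \bar R :=
  ereal_inf [set (dot pi xy.1 + pi0 * dot (rl (vq D s)) xy.2)%:E | xy in Kset s].

Definition Pset (s : S) (Pi : set ('cV[R]_n * R)) : set ('cV[R]_n * R) :=
  [set xt | forall pp, Pi pp -> (Qbar s pp.1 pp.2 <= (dot pp.1 xt.1 + pp.2 * xt.2)%:E)%E].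

Definition PiAll : set ('cV[R]_n * R) := [set pp | 0 <= pp.2].

Definition zLC (p : S -> R) : \bar R :=
  ereal_inf [set (dot (rl (vc D)) xth.1 + \sum_(s : S) p s * xth.2 s)%:E
            | xth in [set xth : 'cV[R]_n * (S -> R) |
                      forall s, Pset s PiAll (xth.1, xth.2 s)]].

Definition zlam (p : S -> R) (lam : S -> 'cV[R]_n) : \bar R :=
  (\sum_(s : S) (p s)%:E *
     ereal_inf [set (dot (rl (vc D)) xy.1 + dot (rl (vq D s)) xy.2
                     + dot (lam s) xy.1)%:E | xy in Kset s])%E.

Definition zD (p : S -> R) : \bar R :=
  ereal_sup [set zlam p lam | lam in [set lam : S -> 'cV[R]_n |
                                       \sum_(s : S) p s *: lam s = 0]].
End Defs.
Arguments Kset R {S n ny} D s.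
Arguments Kbounded R {S n ny} D s.
Arguments zLC R {S n ny} D p.
Arguments zD R {S n ny} D p.

(* Main.v *)
Require Import Defs.
From HB Require Import structures.
From mathcomp Require Import all_boot all_order all_algebra.
From mathcomp Require Import boolp classical_sets reals ereal.
From mathcomp Require Import topology normedtype derive.
From mathcomp Require Import ring lra.
Import Order.TTheory GRing.Theory Num.Theory.
Import numFieldTopology.Exports numFieldNormedType.Exports.
Local Open Scope ring_scope.
Local Open Scope classical_set_scope.


Section Sep.
Variables (R : realType) (I : finType).
Let N := #|I|.
Definition toF (v : 'rV[R]_N) : I -> R := fun i => v ord0 (enum_rank i).
Definition ofF (w : I -> R) : 'rV[R]_N := \row_j w (enum_val j).
Lemma toFK w : toF (ofF w) = w.
Proof. by apply/funext => i; rewrite /toF /ofF mxE enum_rankK. Qed.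

Lemma cont_sum (T : finType) (F : T -> 'rV[R]_N -> R) :
  (forall i, continuous (F i)) -> continuous (fun v => \sum_i F i v).
Proof. idtac.
move=> Fc.
suff H : forall l, continuous (fun v => \sum_(i <- l) F i v) by exact: H.
elim=> [|a l IH].
  have -> : (fun v => \sum_(i <- [::]) F i v) = (fun=> 0) by apply/funext=> v; rewrite big_nil.
  exact: cst_continuous.
have -> : (fun v => \sum_(i <- a :: l) F i v) = (fun v => F a v + \sum_(i <- l) F i v).
  by apply/funext=> v; rewrite big_cons.
by move=> x; apply: continuousD; [exact: Fc|exact: IH].
Qed.

Lemma cont_coord (a : R) i : continuous (fun v : 'rV[R]_N => a * toF v i).
Proof. idtac.
move=> x; apply: continuousM; first exact: cst_continuous.
exact: (@coord_continuous R 1 N ord0 (enum_rank i)).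
Qed.

Lemma cont_lin (a : I -> R) : continuous (fun v : 'rV[R]_N => \sum_i a i * toF v i).
Proof. by apply: cont_sum => i; exact: cont_coord. Qed.

Variables (J : finType) (K : Type) (A : K -> I -> R) (B : K -> \bar R) (bnd : I -> R)
  (M : J -> I -> R) (z : J -> R).

Definition Cset (w : I -> R) := (forall i, `|w i| <= bnd i) /\
   (forall k, (B k <= (\sum_i A k i * w i)%:E)%E).
Definition Lw (w : I -> R) j := \sum_i M j i * w i.
Definition hfun (w : I -> R) := \sum_j (Lw w j - z j) * (Lw w j - z j).

Lemma closed_halfE (b : \bar R) (f : 'rV[R]_N -> R) : continuous f ->
  closed [set v | (b <= (f v)%:E)%E].
Proof. idtac.
move=> fc; case: b => [b| |].
- have -> : [set v | (b%:E <= (f v)%:E)%E] = f @^-1` [set x | b <= x].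
    by apply/seteqP; split=> v /=; rewrite lee_fin.
  by apply: preimage_closed => //; exact: closed_ge.
- have -> : [set v | (+oo <= (f v)%:E)%E] = set0.
    by apply/seteqP; split=> v //=; rewrite leNgt ltey.
  exact: closed0.
- have -> : [set v | (-oo <= (f v)%:E)%E] = setT.
    by apply/seteqP; split=> v //= _; rewrite leNye.
  exact: closedT.
Qed.

Lemma hmin : (exists w, Cset w) ->
  exists2 w0, Cset w0 & forall w, Cset w -> hfun w0 <= hfun w.
Proof. idtac.
move=> [w1 Cw1].
pose Cv := [set v : 'rV[R]_N | Cset (toF v)].
have Cvc : compact Cv.
  pose Box := [set v : 'rV[R]_N | forall j, `[- bnd (enum_val j), bnd (enum_val j)]%classic (v ord0 j)].
  apply: (subclosed_compact (A := Cv) (B := Box)).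
  - have -> : Cv = \bigcap_(i in [set: I]) ([set v : 'rV[R]_N | - bnd i <= toF v i] `&`
                                            [set v | toF v i <= bnd i])
                 `&` \bigcap_(k in [set: K]) [set v | (B k <= (\sum_i A k i * toF v i)%:E)%E].
      apply/seteqP; split=> v /=.
        by move=> [H1 H2]; split=> [i _|k _]; [move: (H1 i); rewrite ler_norml => /andP[]|exact: H2].
      move=> [H1 H2]; split=> [i|k]; last exact: H2 k Logic.I.
      by rewrite ler_norml; have [? ?] := H1 i Logic.I; apply/andP; split.
    apply: closedI; last first.
      by apply: closed_bigI => k _; exact: closed_halfE (cont_lin _).
    apply: closed_bigI => i _; apply: closedI.
      apply: (@preimage_closed _ _ (fun v : 'rV[R]_N => toF v i) [set x | - bnd i <= x]);
        last exact: closed_ge.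
      by move=> x _; exact: (@coord_continuous R 1 N ord0 (enum_rank i)).
    apply: (@preimage_closed _ _ (fun v : 'rV[R]_N => toF v i) [set x | x <= bnd i]);
      last exact: closed_le.
    by move=> x _; exact: (@coord_continuous R 1 N ord0 (enum_rank i)).
  - apply: (@rV_compact R N (fun j => `[- bnd (enum_val j), bnd (enum_val j)]%classic)) => j.
    exact: segment_compact.
  - move=> v [H1 _] j /=; rewrite in_itv /= -ler_norml.
    by have := H1 (enum_val j); rewrite /toF enum_valK.
have hc : continuous (fun v => hfun (toF v)).
  apply: cont_sum => j x.
  have hB : {for x, continuous (fun v : 'rV[R]_N => Lw (toF v) j - z j)}.
    apply: (@continuousB R R^o _ (fun v : 'rV[R]_N => Lw (toF v) j) (fun=> z j) x).
      exact: (cont_lin (M j)).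
    exact: cst_continuous.
  exact: (@continuousM R _ (fun v => Lw (toF v) j - z j) (fun v => Lw (toF v) j - z j) x).
have [v0 v0C v0min] := compact_EVT_min (f := fun v => hfun (toF v))
   (ex_intro _ (ofF w1) (eq_ind_r Cset Cw1 (toFK w1)) : Cv !=set0) Cvc
   (continuous_subspaceT hc).
exists (toF v0); first by move: v0C; rewrite inE.
move=> w Cw; rewrite -(toFK w); apply: v0min; rewrite inE /Cv /= toFK //.
Qed.

Lemma sum_lin (c u v : I -> R) t :
  \sum_i c i * (u i + t * (v i - u i)) =
  \sum_i c i * u i + t * (\sum_i c i * v i - \sum_i c i * u i).
Proof.
rewrite -sumrB mulr_sumr -big_split /=; apply: eq_bigr => i _; ring.
Qed.

Lemma Cset_conv w0 w t : Cset w0 -> Cset w -> 0 <= t <= 1 ->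
  Cset (fun i => w0 i + t * (w i - w0 i)).
Proof.
move=> [b0 h0] [b1 h1] /andP[t0 t1]; split=> [i|k].
  have -> : w0 i + t * (w i - w0 i) = (1 - t) * w0 i + t * w i by ring.
  apply: le_trans (ler_normD _ _) _.
  rewrite !normrM (ger0_norm t0) ger0_norm ?subr_ge0 //.
  have := b0 i; have := b1 i; have := normr_ge0 (w i); have := normr_ge0 (w0 i).
  move=> *; nra.
rewrite sum_lin.
have := h0 k; have := h1 k.
case: (B k) => [b| |] //=; rewrite ?lee_fin => Hb1 Hb0; last by rewrite leNye.
nra.
Qed.

Lemma sep : (exists w, Cset w) -> (forall w, Cset w -> exists j, Lw w j != z j) ->
  exists a : J -> R, exists2 d, 0 < d &
    forall w, Cset w -> \sum_j a j * z j + d <= \sum_j a j * Lw w j.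
Proof.
move=> ne hz; have [w0 Cw0 w0min] := hmin ne.
pose a j := Lw w0 j - z j.
exists a; exists (\sum_j a j * a j).
  have [j0 hj0] := hz w0 Cw0.
  rewrite (bigD1 j0) //=; apply: ltr_pwDl.
    have : a j0 != 0 by rewrite /a subr_eq0.
    move=> h; rewrite -expr2 exprn_even_gt0 //.
  by apply: sumr_ge0 => j _; rewrite -expr2 sqr_ge0.
move=> w Cw.
pose e j := Lw w j - Lw w0 j.
pose P := \sum_j a j * e j.
pose Q := \sum_j e j * e j.
have key : forall t, 0 < t <= 1 -> 0 <= t * (2 * P + t * Q).
  move=> t /andP[t0 t1].
  have := w0min _ (@Cset_conv w0 w t Cw0 Cw (introT andP (conj (ltW t0) t1))).
  rewrite -subr_ge0 /hfun -sumrB.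
  have -> : t * (2 * P + t * Q) = \sum_j t * (2 * (a j * e j) + t * (e j * e j)).
    rewrite [RHS](eq_bigr (fun j => t * 2 * (a j * e j) + t * t * (e j * e j))); last first.
      by move=> j _; ring.
    by rewrite big_split /= -!mulr_sumr /P /Q; ring.
  congr (0 <= _); apply: eq_bigr => j _.
  rewrite /Lw sum_lin -/(Lw w j) -/(Lw w0 j) /a /e; ring.
have P0 : 0 <= P.
  rewrite leNgt; apply/negP => Pn.
  have Q0 : 0 <= Q by apply: sumr_ge0 => j _; rewrite -expr2 sqr_ge0.
  have [Qe|Qp] := eqVneq Q 0.
    have := key 1; rewrite ltr01 lexx Qe => /(_ isT); nra.
  have Qpos : 0 < Q by rewrite lt_def Qp.
  pose t := Num.min 1 (- P / Q).
  have t0 : 0 < t by rewrite lt_min ltr01 divr_gt0 // oppr_gt0.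
  have t1 : t <= 1 by rewrite ge_min lexx.
  have tQ : t * Q <= - P.
    have : t <= - P / Q by rewrite ge_min lexx orbT.
    by rewrite ler_pdivlMr.
  have := key t; rewrite t0 t1 => /(_ isT); nra.
have -> : \sum_j a j * Lw w j = \sum_j a j * z j + \sum_j a j * a j + P.
  rewrite /P -!big_split /=; apply: eq_bigr => j _; rewrite /e /a; ring.
by rewrite lerDl.
Qed.
End Sep.


Section DotLemmas.
Variable (R : realType).
Lemma dotDl k (u v x : 'cV[R]_k) : dot (u + v) x = dot u x + dot v x.
Proof. rewrite /dot -big_split /=; apply: eq_bigr => i _; rewrite mxE; ring. Qed.
Lemma dotZl k a (u x : 'cV[R]_k) : dot (a *: u) x = a * dot u x.
Proof. rewrite /dot mulr_sumr; apply: eq_bigr => i _; rewrite mxE; ring. Qed.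
Lemma dot0l k (x : 'cV[R]_k) : dot 0 x = 0.
Proof. by rewrite /dot big1 // => i _; rewrite mxE mul0r. Qed.
Lemma dot_suml k (T : finType) (F : T -> 'cV[R]_k) x :
  dot (\sum_t F t) x = \sum_t dot (F t) x.
Proof.
rewrite /dot exchange_big /=; apply: eq_bigr => i _.
by rewrite summxE mulr_suml.
Qed.
Lemma dot_bnd k (u x : 'cV[R]_k) m : (forall i, `|x i 0| <= m) ->
  `|dot u x| <= (\sum_i `|u i 0|) * m.
Proof.
move=> hx; rewrite /dot mulr_suml; apply: le_trans (ler_norm_sum _ _ _) _.
apply: ler_sum => i _; rewrite normrM; apply: ler_wpM2l => //.
Qed.
Lemma le_sum_norm (T : finType) (F : T -> R) t : `|F t| <= \sum_u `|F u|.
Proof.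
rewrite (bigD1 t) //= lerDl; by apply: sumr_ge0.
Qed.
End DotLemmas.


Section Main.
Variables (R : realType) (S : finType) (n ny : nat) (D : tssip S n ny) (p : S -> R).
Hypotheses (p0 : forall s, 0 < p s) (p1 : \sum_s p s = 1)
  (Kne : forall s, Kset R D s !=set0) (Kb : forall s, Kbounded R D s).

Local Notation c := (rl R (vc D)).
Local Notation q s := (rl R (vq D s)).
Local Notation Pair := ('cV[R]_n * 'cV[R]_ny)%type.

Definition infK s (Phi : Pair -> R) :=
  ereal_inf [set (Phi xy)%:E | xy in Kset R D s].

Lemma Mall_ex : exists m : R, 0 <= m /\ forall s xy, Kset R D s xy ->
  (forall i, `|xy.1 i 0| <= m) /\ (forall j, `|xy.2 j 0| <= m).
Proof.
have [Mf HM] := choice Kb.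
exists (\sum_s `|Mf s|); split; first by apply: sumr_ge0.
move=> s xy /(HM s) [h1 h2]; split=> i.
  apply: le_trans (h1 i) _; apply: le_trans (ler_norm _) _; exact: le_sum_norm.
apply: le_trans (h2 i) _; apply: le_trans (ler_norm _) _; exact: le_sum_norm.
Qed.

Lemma infK_fin s Phi B : (forall xy, Kset R D s xy -> - B <= Phi xy) ->
  exists r, infK s Phi = r%:E.
Proof.
move=> hB; have [xy0 K0] := Kne s.
have h1 : ((- B)%:E <= infK s Phi)%E.
  by apply: le_ereal_inf_tmp => _ [xy Kxy <-]; rewrite lee_fin; exact: hB.
have h2 : (infK s Phi <= (Phi xy0)%:E)%E by apply: ereal_inf_lbound; exists xy0.
move: h1 h2; case: (infK s Phi) => [r| |] //= _ _; by exists r.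
Qed.

Lemma prod_inf (Phi : S -> Pair -> R) (g : R) :
  (forall s, exists B, forall xy, Kset R D s xy -> - B <= Phi s xy) ->
  (forall f : S -> Pair, (forall s, Kset R D s (f s)) -> g <= \sum_s p s * Phi s (f s)) ->
  (g%:E <= \sum_s (p s)%:E * infK s (Phi s))%E.
Proof.
move=> hB hf.
have /choice [r hr] : forall s, exists r, infK s (Phi s) = r%:E.
  by move=> s; have [B hB'] := hB s; exact: infK_fin hB'.
have -> : (\sum_s (p s)%:E * infK s (Phi s) = (\sum_s p s * r s)%:E)%E.
  by rewrite -sumEFin; apply: eq_bigr => s _; rewrite hr.
rewrite lee_fin leNgt; apply/negP => hlt.
pose eta := (g - \sum_s p s * r s) / 2.
have eta0 : 0 < eta by rewrite divr_gt0 // subr_gt0.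
have /choice [f hf'] : forall s, exists xy, Kset R D s xy /\ Phi s xy < r s + eta.
  move=> s.
  have : (infK s (Phi s) < (r s + eta)%:E)%E by rewrite hr lte_fin ltrDl.
  by move=> /ereal_inf_lt [_ [xy Kxy <-]]; rewrite lte_fin => h; exists xy.
have := hf f (fun s => (hf' s).1).
have : \sum_s p s * Phi s (f s) <= \sum_s p s * (r s + eta).
  apply: ler_sum => s _; apply: ler_wpM2l; first exact: ltW.
  exact: ltW (hf' s).2.
have -> : \sum_s p s * (r s + eta) = \sum_s p s * r s + eta.
  rewrite (eq_bigr (fun s => p s * r s + p s * eta)); last by move=> s _; rewrite mulrDr.
  by rewrite big_split /= -mulr_suml p1 mul1r.
rewrite /eta => h1 h2; lra.
Qed.


Lemma zlam_le (lam : S -> 'cV[R]_n) (x : 'cV[R]_n) (th : S -> R) : \sum_s p s *: lam s = 0 ->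
  (forall s, Pset D s (@PiAll R n) (x, th s)) ->
  (zlam D p lam <= (dot c x + \sum_s p s * th s)%:E)%E.
Proof.
move=> hlam hP; rewrite /zlam.
have h s : (ereal_inf [set (dot c xy.1 + dot (q s) xy.2 + dot (lam s) xy.1)%:E
     | xy in Kset R D s] <= (dot c x + dot (lam s) x + th s)%:E)%E.
  apply: (@le_trans _ _ (Qbar D s (c + lam s) 1)).
    apply: le_ereal_inf_tmp => _ [xy Kxy <-]; apply: ereal_inf_lbound.
    by exists xy => //; rewrite dotDl mul1r; congr (_%:E); ring.
  have := hP s (c + lam s, 1) ler01; rewrite /= dotDl mul1r //.
apply: (@le_trans _ _ (\sum_s (p s)%:E * (dot c x + dot (lam s) x + th s)%:E)%E).
  by apply: lee_sum => s _; apply: lee_wpmul2l => //; rewrite lee_fin ltW.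
rewrite (eq_bigr (fun s => (p s * (dot c x + dot (lam s) x + th s))%:E)) //.
rewrite sumEFin lee_fin le_eqVlt; apply/orP; left; apply/eqP.
rewrite (eq_bigr (fun s => p s * dot c x + (p s * dot (lam s) x + p s * th s))); last first.
  by move=> s _; ring.
rewrite big_split big_split /= -mulr_suml p1 mul1r.
have -> : \sum_s p s * dot (lam s) x = 0.
  have := congr1 (fun u => dot u x) hlam; rewrite /= dot_suml dot0l => h0.
  by apply: etrans h0; apply: eq_bigr => s _; rewrite dotZl.
by rewrite add0r.
Qed.

Lemma zD_le_zLC : (zD R D p <= zLC R D p)%E.
Proof.
apply: ge_ereal_sup => _ [lam hlam <-].
apply: le_ereal_inf_tmp => _ [[x th] hP <-]; exact: zlam_le.
Qed.

Definition KK := {pp : S * ('cV[R]_n * R) | 0 <= pp.2.2}.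
Definition xsF (w : S * 'I_n.+1 -> R) s : 'cV[R]_n := \col_i w (s, lift ord0 i).
Definition thF (w : S * 'I_n.+1 -> R) s := w (s, ord0).
Definition AA (k : KK) (i : S * 'I_n.+1) : R :=
  if i.1 == (sval k).1 then
    (if unlift ord0 i.2 is Some j then (sval k).2.1 j 0 else (sval k).2.2) else 0.
Definition BB (k : KK) : \bar R := Qbar D (sval k).1 (sval k).2.1 (sval k).2.2.
Definition MM (j : 'I_1 + S * 'I_n) (i : S * 'I_n.+1) : R :=
  match j with
  | inl _ => p i.1 * (if unlift ord0 i.2 is Some k then c k 0 else 1)
  | inr sk => if unlift ord0 i.2 is Some k' then
                (if k' == sk.2 then p sk.1 * ((sk.1 == i.1)%:R - p i.1) else 0) else 0
  end.

Lemma sum_I (F : S * 'I_n.+1 -> R) :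
  \sum_i F i = \sum_t (F (t, ord0) + \sum_k F (t, lift ord0 k)).
Proof.
rewrite (eq_bigr (fun i => F (i.1, i.2))); last by case.
rewrite -(pair_bigA _ (fun t o => F (t, o))) /=; apply: eq_bigr => t _.
by rewrite big_ord_recl.
Qed.

Lemma sumAA k w : \sum_i AA k i * w i =
  dot (sval k).2.1 (xsF w (sval k).1) + (sval k).2.2 * thF w (sval k).1.
Proof.
rewrite sum_I (bigD1 (sval k).1) //= [X in _ + X = _]big1 ?addr0; last first.
  move=> t /negbTE ht; rewrite /AA /= (ifF _ _ ht) mul0r add0r big1 // => i _.
  by rewrite (ifF _ _ ht) mul0r.
rewrite /AA /= eqxx unlift_none addrC; congr (_ + _).
by rewrite /dot; apply: eq_bigr => i _; rewrite liftK /xsF mxE.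
Qed.

Lemma LwL w : Lw R _ _ MM w (inl ord0) = \sum_t p t * (thF w t + dot c (xsF w t)).
Proof.
rewrite /Lw sum_I; apply: eq_bigr => t _.
rewrite /MM /= unlift_none mulr1 mulrDr; congr (_ + _).
rewrite /dot mulr_sumr; apply: eq_bigr => i _; rewrite liftK /= /xsF !mxE; ring.
Qed.

Lemma LwR w s k : Lw R _ _ MM w (inr (s, k)) =
  p s * (xsF w s k 0 - \sum_t p t * xsF w t k 0).
Proof.
rewrite /Lw sum_I /MM /= (eq_bigr (fun t => p s * ((s == t)%:R - p t) * xsF w t k 0)); last first.
  move=> t _; rewrite unlift_none mul0r add0r (bigD1 k) //= big1 ?addr0.
    by rewrite liftK eqxx /xsF mxE.
  by move=> i /negbTE hi; rewrite liftK hi mul0r.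
rewrite (eq_bigr (fun t => p s * ((s == t)%:R * xsF w t k 0) - p s * (p t * xsF w t k 0)));
  last by move=> t _; ring.
rewrite sumrB -!mulr_sumr mulrBr; congr (_ * _ - _).
rewrite (bigD1 s) //= eqxx mul1r big1 ?addr0 // => t.
by rewrite eq_sym => /negbTE ->; rewrite mul0r.
Qed.

Lemma sumJ (F : 'I_1 + S * 'I_n -> R) :
  \sum_j F j = F (inl ord0) + \sum_s \sum_k F (inr (s, k)).
Proof.
rewrite big_sumType /= big_ord1; congr (_ + _).
rewrite (eq_bigr (fun i => F (inr (i.1, i.2)))); last by case.
by rewrite -(pair_bigA _ (fun s k => F (inr (s, k)))).
Qed.

Definition lamOf (beta : S -> 'I_n -> R) s : 'cV[R]_n :=
  \col_k (beta s k - \sum_t p t * beta t k).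

Lemma lamOf_sum beta : \sum_s p s *: lamOf beta s = 0.
Proof.
apply/matrixP => k j; rewrite summxE mxE (eq_bigr (fun s => p s * beta s k - p s * \sum_t p t * beta t k)).
  by rewrite sumrB -mulr_suml p1 mul1r subrr.
by move=> s _; rewrite !mxE; ring.
Qed.

Lemma G_id (beta : S -> 'I_n -> R) (w : S * 'I_n.+1 -> R) :
  \sum_s \sum_k beta s k * (p s * (xsF w s k 0 - \sum_t p t * xsF w t k 0)) =
  \sum_s p s * dot (lamOf beta s) (xsF w s).
Proof.
set X := fun k => \sum_t p t * xsF w t k 0.
set B := fun k => \sum_t p t * beta t k.
rewrite (eq_bigr (fun s => \sum_k p s * beta s k * xsF w s k 0 - \sum_k p s * beta s k * X k));
  last by move=> s _; rewrite -sumrB; apply: eq_bigr => k _; rewrite /X; ring.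
rewrite [RHS](eq_bigr (fun s => \sum_k p s * beta s k * xsF w s k 0 - \sum_k p s * B k * xsF w s k 0)); last first.
  by move=> s _; rewrite /dot mulr_sumr -sumrB; apply: eq_bigr => k _; rewrite mxE /B; ring.
rewrite !sumrB; congr (_ - _).
rewrite exchange_big [RHS]exchange_big; apply: eq_bigr => k _.
rewrite -mulr_suml [RHS](eq_bigr (fun s => B k * (p s * xsF w s k 0))); last by move=> s _; rewrite /B; ring.
by rewrite -mulr_sumr /X /B mulrC.
Qed.

Lemma dot_lb (u : 'cV[R]_n) {x : 'cV[R]_n} {m} : (forall i, `|x i 0| <= m) ->
  - ((\sum_i `|u i 0|) * m) <= dot u x.
Proof. by move=> h; apply: lerNnormlW; exact: dot_bnd. Qed.

Lemma dot_lb2 (u : 'cV[R]_ny) {x : 'cV[R]_ny} {m} : (forall i, `|x i 0| <= m) ->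
  - ((\sum_i `|u i 0|) * m) <= dot u x.
Proof. by move=> h; apply: lerNnormlW; exact: dot_bnd. Qed.

Lemma Phi_lb m (hm : forall s xy, Kset R D s xy ->
  (forall i, `|xy.1 i 0| <= m) /\ (forall j, `|xy.2 j 0| <= m)) (u : 'cV[R]_n) s :
  exists B, forall xy, Kset R D s xy -> - B <= dot c xy.1 + dot (q s) xy.2 + dot u xy.1.
Proof.
exists ((\sum_i `|c i 0|) * m + (\sum_j `|q s j 0|) * m + (\sum_i `|u i 0|) * m).
move=> xy /hm [h1 h2].
have := dot_lb c h1; have := dot_lb2 (q s) h2; have := dot_lb u h1; lra.
Qed.

Definition wOf (f : S -> Pair) (i : S * 'I_n.+1) : R :=
  if unlift ord0 i.2 is Some k then (f i.1).1 k 0 else dot (q i.1) (f i.1).2.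

Lemma xsF_wOf f s : xsF (wOf f) s = (f s).1.
Proof. by apply/matrixP => k j; rewrite ord1 mxE /wOf /= liftK. Qed.

Lemma thF_wOf f s : thF (wOf f) s = dot (q s) (f s).2.
Proof. by rewrite /thF /wOf /= unlift_none. Qed.

Lemma main_le (r : R) : (zD R D p < r%:E)%E -> (zLC R D p <= r%:E)%E.
Proof.
move=> hD; rewrite leNgt; apply/negP => hLC.
have [m [m0 hm]] := Mall_ex.
set Cb := \sum_i `|c i 0|.
set Qb := \sum_s \sum_j `|q s j 0|.
have Cb0 : 0 <= Cb by apply: sumr_ge0.
have Qb0 : 0 <= Qb by apply: sumr_ge0 => s _; apply: sumr_ge0.
have Qbs s : \sum_j `|q s j 0| <= Qb.
  rewrite /Qb (bigD1 s) //= lerDl; apply: sumr_ge0 => t _; exact: sumr_ge0.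
set T := Qb * m + `|r| + Cb * m.
have T0 : 0 <= T by rewrite /T; have := normr_ge0 r; nra.
pose bnd (i : S * 'I_n.+1) := if i.2 == ord0 then T else m.
pose z (j : 'I_1 + S * 'I_n) := if j is inl _ then r else 0.
pose CS := Cset R _ KK AA BB bnd.
have CS_wOf f : (forall s, Kset R D s (f s)) -> CS (wOf f).
  move=> hf; split.
    move=> [t o]; rewrite /bnd /wOf /=.
    case: (unliftP ord0 o) => [k|] ->.
      rewrite eq_sym (negbTE (neq_lift ord0 k)); exact: (hm _ _ (hf t)).1.
    rewrite eqxx; apply: le_trans (@dot_bnd R _ (q t) _ m (hm _ _ (hf t)).2) _.
    rewrite /T; have := Qbs t; have := normr_ge0 r; nra.
  move=> k; rewrite sumAA xsF_wOf thF_wOf; apply: ereal_inf_lbound.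
  by exists (f (sval k).1) => //; exact: hf.
have ne : exists w, CS w.
  have [f hf] := choice Kne; exists (wOf f); exact: CS_wOf.
have hz : forall w, CS w -> exists j, Lw R _ _ MM w j != z j.
  move=> w Cw; have [//|hn] := pselect (exists j, Lw R _ _ MM w j != z j).
  have heq j : Lw R _ _ MM w j = z j.
    by apply/eqP/negPn/negP => hj; apply: hn; exists j.
  pose x : 'cV[R]_n := \col_k \sum_t p t * xsF w t k 0.
  have hxs s : xsF w s = x.
    apply/matrixP => k j; rewrite ord1 [RHS]mxE.
    have := heq (inr (s, k)); rewrite LwR /z => /eqP; rewrite mulf_eq0 gt_eqF //=.
    by rewrite subr_eq0 => /eqP.
  exfalso; move: hLC; rewrite ltNge => /negP; apply.
  apply: (@le_trans _ _ (dot c x + \sum_s p s * thF w s)%:E).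
    apply: ereal_inf_lbound; exists (x, thF w) => //= s [pi pi0] /= hpi0.
    have := Cw.2 (exist _ (s, (pi, pi0)) hpi0); rewrite sumAA /BB /=.
    have -> : x = xsF w s by rewrite hxs.
    by [].
  rewrite lee_fin le_eqVlt; apply/orP; left; apply/eqP.
  have := heq (inl ord0); rewrite LwL /z => <-.
  rewrite [RHS](eq_bigr (fun t => p t * thF w t + p t * dot c x)); last first.
    by move=> t _; rewrite hxs mulrDr.
  by rewrite big_split /= -mulr_suml p1 mul1r addrC.
have [a [d d0 hsep]] := @sep R _ _ KK AA BB bnd MM z ne hz.
set alpha := a (inl ord0).
pose beta s k := a (inr (s, k)).
pose lam := lamOf beta.
have hsep' w : CS w -> alpha * r + d <=
    alpha * (\sum_t p t * (thF w t + dot c (xsF w t))) + \sum_s p s * dot (lam s) (xsF w s).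
  move=> Cw; have := hsep w Cw.
  have Z : \sum_s \sum_k a (inr (s, k)) * z (inr (s, k)) = 0.
    by rewrite big1 // => s _; rewrite big1 // => k _; rewrite mulr0.
  have L : \sum_s \sum_k a (inr (s, k)) * Lw R _ _ MM w (inr (s, k)) =
           \sum_s p s * dot (lam s) (xsF w s).
    by rewrite -G_id; apply: eq_bigr => s _; apply: eq_bigr => k _; rewrite LwR.
  by rewrite !sumJ Z L addr0 LwL.
have fin lam' : \sum_s p s *: lam' s = 0 -> (r%:E <= zlam D p lam')%E -> False.
  move=> h0 hr; have : (zlam D p lam' <= zD R D p)%E.
    by apply: ereal_sup_ubound; exists lam'.
  move=> h; have := lt_le_trans hD (le_trans hr h); rewrite ltxx.
  done.
have [apos|aneg] := ltrP 0 alpha.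
  pose lam' s := alpha^-1 *: lam s.
  apply: (fin lam').
    rewrite (eq_bigr (fun s => alpha^-1 *: (p s *: lam s))); last first.
      by move=> s _; rewrite /lam' !scalerA mulrC.
    by rewrite -scaler_sumr lamOf_sum scaler0.
  apply: (@prod_inf (fun s xy => dot c xy.1 + dot (q s) xy.2 + dot (lam' s) xy.1) r).
    by move=> s; exact: Phi_lb hm _ s.
  move=> f hf; have := hsep' _ (CS_wOf f hf).
  have E1 : \sum_t p t * (thF (wOf f) t + dot c (xsF (wOf f) t)) =
            \sum_t p t * (dot (q t) (f t).2 + dot c (f t).1).
    by apply: eq_bigr => t _; rewrite xsF_wOf thF_wOf.
  have E2 : \sum_s p s * dot (lam s) (xsF (wOf f) s) = \sum_s p s * dot (lam s) (f s).1.
    by apply: eq_bigr => t _; rewrite xsF_wOf.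
  have E3 : \sum_s p s * (dot c (f s).1 + dot (q s) (f s).2 + dot (lam' s) (f s).1) =
     \sum_s p s * (dot (q s) (f s).2 + dot c (f s).1) + alpha^-1 * \sum_s p s * dot (lam s) (f s).1.
    rewrite mulr_sumr -big_split; apply: eq_bigr => s _; rewrite /lam' dotZl /=; ring.
  rewrite E1 E2 E3 => h.
  rewrite -(ler_pM2l apos) mulrDr mulrA mulfV ?gt_eqF // mul1r; lra.
have hG w : CS w -> d <= \sum_s p s * dot (lam s) (xsF w s).
  move=> Cw.
  pose w' (i : S * 'I_n.+1) := if i.2 == ord0 then T else w i.
  have xs' s : xsF w' s = xsF w s.
    by apply/matrixP => k j; rewrite !mxE /w' /=.
  have th' s : thF w' s = T by rewrite /thF /w' /=.
  have hb t i : `|xsF w t i 0| <= m.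
    by have := Cw.1 (t, lift ord0 i); rewrite /bnd /= mxE.
  have Cw' : CS w'.
    split.
      move=> [t o]; have := Cw.1 (t, o); rewrite /w' /bnd /=.
      by case: (o == ord0) => // _; rewrite ger0_norm.
    move=> k; apply: le_trans (Cw.2 k) _; rewrite !sumAA xs' th' lee_fin lerD2l.
    apply: ler_wpM2l; first exact: (svalP k).
    have := Cw.1 ((sval k).1, ord0); rewrite /bnd /= => h.
    exact: le_trans (ler_norm _) h.
  have := hsep' _ Cw'.
  have E : \sum_s p s * dot (lam s) (xsF w' s) = \sum_s p s * dot (lam s) (xsF w s).
    by apply: eq_bigr => s _; rewrite xs'.
  have Lr : r <= \sum_t p t * (thF w' t + dot c (xsF w' t)).
    rewrite -[X in X <= _]mul1r -p1 mulr_suml; apply: ler_sum => t _.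
    apply: ler_wpM2l; first exact: ltW.
    rewrite th' xs'; have := dot_lb c (hb t); rewrite /T -/Cb.
    have := ler_norm r; have := mulr_ge0 Qb0 m0; lra.
  rewrite E => h; have := ler_wnM2l aneg Lr; lra.
pose t := (`|r| + (Cb + Qb) * m) / d.
have t0 : 0 <= t.
  apply: divr_ge0; last exact: ltW.
  have := mulr_ge0 (addr_ge0 Cb0 Qb0) m0; have := normr_ge0 r; lra.
have td : t * d = `|r| + (Cb + Qb) * m by rewrite /t mulfVK // gt_eqF.
pose lam' s := t *: lam s.
apply: (fin lam').
  rewrite (eq_bigr (fun s => t *: (p s *: lam s))); last first.
    by move=> s _; rewrite /lam' !scalerA mulrC.
  by rewrite -scaler_sumr lamOf_sum scaler0.
apply: (@prod_inf (fun s xy => dot c xy.1 + dot (q s) xy.2 + dot (lam' s) xy.1) r).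
  by move=> s; exact: Phi_lb hm _ s.
move=> f hf; have := hG _ (CS_wOf f hf).
have E2 : \sum_s p s * dot (lam s) (xsF (wOf f) s) = \sum_s p s * dot (lam s) (f s).1.
  by apply: eq_bigr => s _; rewrite xsF_wOf.
have E3 : \sum_s p s * (dot c (f s).1 + dot (q s) (f s).2 + dot (lam' s) (f s).1) =
   \sum_s p s * (dot c (f s).1 + dot (q s) (f s).2) + t * \sum_s p s * dot (lam s) (f s).1.
  rewrite mulr_sumr -big_split; apply: eq_bigr => s _; rewrite /lam' dotZl /=; ring.
have Lb : - ((Cb + Qb) * m) <= \sum_s p s * (dot c (f s).1 + dot (q s) (f s).2).
  rewrite -[X in X <= _]mul1r -p1 mulr_suml; apply: ler_sum => s _.
  apply: ler_wpM2l; first exact: ltW.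
  have := dot_lb c (hm _ _ (hf s)).1; have := dot_lb2 (q s) (hm _ _ (hf s)).2.
  have := ler_wpM2r m0 (Qbs s); rewrite -/Cb; lra.
rewrite E2 E3 => h.
have := ler_wpM2l t0 h; rewrite td; have := ler_norm r; lra.
Qed.


Lemma zLC_le_zD : (zLC R D p <= zD R D p)%E.
Proof.
case E: (zD R D p) => [v| |]; last 2 first.
- exact: leey.
- have h r : (zLC R D p <= r%:E)%E by apply: main_le; rewrite E ltNye.
  case E2: (zLC R D p) => [u| |] //.
    by have := h (u - 1); rewrite E2 lee_fin leNgt ltrBlDr ltrDl ltr01.
  by have := h 0; rewrite E2.
apply/lee_addgt0Pr => e e0; rewrite -EFinD; apply: main_le.
by rewrite E lte_fin ltrDl.
Qed.
End Main.

Theorem theorem2 (R : realType) (S : finType) (n ny : nat) (D : tssip S n ny)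
  (p : S -> R) :
  (forall s, 0 < p s) -> \sum_(s : S) p s = 1 ->
  (forall s, Kset R D s !=set0) -> (forall s, Kbounded R D s) ->
  zLC R D p = zD R D p.
Proof.
move=> p0 p1 Kne Kb; apply/eqP; rewrite eq_le; apply/andP; split.
  exact: zLC_le_zD.
exact: zD_le_zLC.
Qed.
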